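(* Let $C>1$, $P$ a probability measure on $[0,\infty)$ with $\mu_{P,C}>0$, and $\alpha>0$ such that $\alpha\,\mu_{P,C}\le\mathbb{E}_{t\sim P}\big[t\,\mathbf 1[t<m_P]\big]$. Then: (a) $G_{P,C}(\mu)\ge\alpha\mu$ for $0\le\mu\le\frac{\mu_{P,C}}2$; (b) $G_{P,C}(\mu)\ge\alpha(\mu_{P,C}-\mu)$ for $\frac{\mu_{P,C}}2\le\mu\le\mu_{P,C}$; (c) $G_{P,C}(\mu)\le-\alpha(\mu-\mu_{P,C})$ for $\mu\ge\mu_{P,C}$.
   Context: For $\mu\ge0$ define $G_{P,C}(\mu):=\mathbb{E}_{t\sim P}[\min\{t,C\mu\}]-\mu$. The $C$-clipped mean $\mu_{P,C}$ is the largest $\mu\ge0$ with $G_{P,C}(\mu)=0$. The $\frac1C$-median is $m_P:=\sup\{M\ge0:\mathbb{P}_{t\sim P}[t\ge M]\ge\frac1C\}$. *)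

(* Defs.v *)
From HB Require Import structures.
From mathcomp Require Import all_boot all_order all_algebra.
From mathcomp Require Import all_classical all_reals all_analysis.
Set Implicit Arguments. Unset Strict Implicit. Unset Printing Implicit Defensive.
Import Order.TTheory GRing.Theory Num.Theory.
Local Open Scope classical_set_scope.
Local Open Scope ring_scope.

(* P is a probability measure on the Borel sets of R; "P on [0,oo)" is
   expressed by the hypothesis P `]-oo, 0[ = 0. *)

Definition Gclip {R : realType} (P : probability R R) (C mu : R) : \bar R :=
  (\int[P]_(t in setT) (Order.min t (C * mu))%:E - mu%:E)%E.

Definition is_clipped_mean {R : realType} (P : probability R R) (C m : R) : Prop :=
  0 <= m /\ Gclip P C m = 0%E /\
  (forall mu : R, 0 <= mu -> Gclip P C mu = 0%E -> mu <= m).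

Definition inv_median {R : realType} (P : probability R R) (C : R) : R :=
  sup [set M : R | 0 <= M /\ ((C^-1)%:E <= P `[M, +oo[%classic)%E].

(* Main.v *)
Require Import Defs.
From HB Require Import structures.
From mathcomp Require Import all_boot all_order all_algebra.
From mathcomp Require Import all_classical all_reals all_analysis.
From mathcomp Require Import lra measurable_realfun.
Set Implicit Arguments. Unset Strict Implicit. Unset Printing Implicit Defensive.
Import Order.TTheory GRing.Theory Num.Theory.
Local Open Scope classical_set_scope.
Local Open Scope ring_scope.

Section S.
Context (R : realType) (P : probability R R).
Hypothesis P0 : P `]-oo, 0[%classic = 0%E.

Definition relu (t : R) : R := Order.max t 0.
Definition good (h : R -> R) :=
  measurable_fun setT h /\ exists K : R, forall s, 0 <= s -> `|h s| <= K.
Definition Ex (h : R -> R) : R := fine (\int[P]_(t in setT) (h (relu t))%:E).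

Lemma relu_ge0 t : 0 <= relu t.
Proof. by rewrite /relu le_max lexx orbT. Qed.

Lemma mrelu : measurable_fun setT relu.
Proof. by apply: measurable_maxr => //; exact: measurable_cst. Qed.

Lemma good_int h : good h -> P.-integrable setT (EFin \o (h \o relu)).
Proof.
move=> [mh [K hK]]; apply: measurable_bounded_integrable => //.
- by apply: (le_lt_trans (probability_le1 P measurableT)); rewrite ltry.
- by apply: measurableT_comp; [exact: mh|exact: mrelu].
- exists K; split; first exact: num_real.
  move=> M KM x _ /=; apply: le_trans (hK _ (relu_ge0 x)) _; exact: ltW.
Qed.

Lemma Ex_int h : good h ->
  (\int[P]_(t in setT) (h (relu t))%:E = (Ex h)%:E)%E.
Proof. move=> g; rewrite /Ex fineK //; apply: integrable_fin_num => //; exact: good_int g. Qed.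

Lemma Ex_le h1 h2 : good h1 -> good h2 ->
  (forall s, 0 <= s -> h1 s <= h2 s) -> Ex h1 <= Ex h2.
Proof.
move=> g1 g2 H; rewrite -lee_fin -(Ex_int g1) -(Ex_int g2).
apply: le_integral => //; [exact: good_int g1|exact: good_int g2|].
by move=> x _; rewrite lee_fin; apply: H; exact: relu_ge0.
Qed.

Lemma good_add h1 h2 : good h1 -> good h2 -> good (fun s => h1 s + h2 s).
Proof.
move=> [m1 [K1 H1]] [m2 [K2 H2]]; split; first exact: measurable_funD.
exists (K1 + K2) => s s0; apply: le_trans (ler_normD _ _) _; exact: lerD (H1 _ s0) (H2 _ s0).
Qed.

Lemma good_scale c h : good h -> good (fun s => c * h s).
Proof.
move=> [m1 [K1 H1]]; split; first by apply: measurable_funM => //; exact: measurable_cst.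
exists (`|c| * K1) => s s0; rewrite normrM; apply: ler_wpM2l => //; exact: H1.
Qed.

Lemma good_cst c : good (fun _ => c).
Proof. by split; [exact: measurable_cst|exists `|c|]. Qed.

Lemma Ex_add h1 h2 : good h1 -> good h2 -> Ex (fun s => h1 s + h2 s) = Ex h1 + Ex h2.
Proof.
move=> g1 g2; apply/eqP; rewrite -(@eqe R) EFinD -(Ex_int g1) -(Ex_int g2).
rewrite -(Ex_int (good_add g1 g2)); apply/eqP.
under eq_integral do rewrite EFinD.
by apply: integralD => //; [exact: good_int g1|exact: good_int g2].
Qed.

Lemma Ex_scale c h : good h -> Ex (fun s => c * h s) = c * Ex h.
Proof.
move=> g; apply/eqP; rewrite -(@eqe R) EFinM -(Ex_int g).
rewrite -(Ex_int (good_scale c g)); apply/eqP.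
under eq_integral do rewrite EFinM.
by apply: integralZl => //; exact: good_int g.
Qed.

Lemma Ex_cst c : Ex (fun _ => c) = c.
Proof.
rewrite /Ex (_ : (fun t => _) = cst c%:E) // integral_cst //.
by apply: (@eq_trans _ _ (fine (c%:E * 1)%E)); [congr (fine (_ * _)); exact: probability_setT|rewrite mule1].
Qed.

Lemma Ex_relu h : measurable_fun setT h ->
  (\int[P]_(t in setT) (h t)%:E = \int[P]_(t in setT) (h (relu t))%:E)%E.
Proof.
move=> mh; apply: ae_eq_integral => //.
- exact/measurable_EFinP.
- by apply/measurable_EFinP; apply: measurableT_comp; [exact: mh|exact: mrelu].
- exists `]-oo, 0[%classic; split => //.
  move=> x /= Hx; apply: contrapT => Hx'; apply: Hx => _.
  rewrite /relu max_l //; rewrite leNgt; apply/negP => x0; apply: Hx'.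
  by rewrite /= in_itv.
Qed.


Definition ind (M : R) (s : R) : R := if M <= s then 1 else 0.
Definition indg (M : R) (s : R) : R := if M < s then 1 else 0.
Definition Lf (m : R) (s : R) : R := if s < m then s else 0.

Lemma good_min c : good (fun s => Order.min s c).
Proof.
split; first by apply: measurable_minr => //; exact: measurable_cst.
exists `|c| => s s0; rewrite /Order.min; case: ifPn => h //.
rewrite ger0_norm //; apply: le_trans (ltW h) _; exact: ler_norm.
Qed.

Lemma good_ind M : good (ind M).
Proof.
split; last by exists 1 => s _; rewrite /ind; case: ifPn; rewrite ?normr1 ?normr0.
apply: measurable_fun_ifT; [apply: measurable_fun_ler => //; exact: measurable_cst| exact: measurable_cst| exact: measurable_cst].
Qed.

Lemma good_indg M : good (indg M).
Proof.
split; last by exists 1 => s _; rewrite /indg; case: ifPn; rewrite ?normr1 ?normr0.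
apply: measurable_fun_ifT; [apply: measurable_fun_ltr => //; exact: measurable_cst| exact: measurable_cst| exact: measurable_cst].
Qed.

Lemma good_Lf m : good (Lf m).
Proof.
split.
  apply: measurable_fun_ifT; [apply: measurable_fun_ltr => //; exact: measurable_cst| exact: measurable_id| exact: measurable_cst].
exists `|m| => s s0; rewrite /Lf; case: ifPn => h; last by rewrite normr0.
rewrite ger0_norm //; apply: le_trans (ltW h) _; exact: ler_norm.
Qed.

Lemma B1 C mu : Gclip P C mu = (Ex (fun s => Order.min s (C * mu)) - mu)%:E.
Proof.
rewrite /Gclip EFinB -Ex_int; last exact: good_min.
rewrite (Ex_relu (h := fun t => Order.min t (C * mu))) //.
by apply: measurable_minr => //; exact: measurable_cst.
Qed.

Lemma B2 m : (\int[P]_(t in setT) (if t < m then t else 0)%:E = (Ex (Lf m))%:E)%E.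
Proof.
rewrite -Ex_int; last exact: good_Lf.
exact: (Ex_relu (h := Lf m)) (proj1 (good_Lf m)).
Qed.

Lemma B3 M : P `[M, +oo[%classic = (Ex (ind M))%:E.
Proof.
rewrite -Ex_int; last exact: good_ind.
rewrite -(Ex_relu (h := ind M)); last exact: (proj1 (good_ind M)).
rewrite (_ : (fun t => _) = (fun t => (\1_(`[M, +oo[%classic) t)%:E)); last first.
  apply: funext => t; rewrite indicE /ind.
  by case: ifPn => h; [rewrite mem_set //= in_itv /= h | rewrite memNset //= in_itv /= (negbTE h)].
symmetry; have h := integral_indic P measurableT (measurable_itv `[M, +oo[).
by rewrite setIT in h; exact: h.
Qed.

Lemma Ffact (m c : R) :
  (forall e, 0 < e -> exists M, m - e < M /\ (c%:E <= P `[M, +oo[%classic)%E) ->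
  (c%:E <= P `[m, +oo[%classic)%E.
Proof.
move=> H.
pose F := fun n : nat => `[m - n.+1%:R^-1, +oo[%classic : set R.
have mF : forall n, measurable (F n) by move=> n; exact: measurable_itv.
have capF : \bigcap_n F n = `[m, +oo[%classic.
  apply/seteqP; split => x /=.
  - move=> Hx; rewrite in_itv /= andbT leNgt; apply/negP => xm.
    have [k hk] := ltr_add_invr xm.
    have := Hx k I; rewrite /F /= in_itv /= andbT => hx.
    by rewrite lerBlDr in hx; have := lt_le_trans hk hx; rewrite ltxx.
  - rewrite in_itv /= andbT => mx n _; rewrite /F /= in_itv /= andbT.
    apply: le_trans mx; rewrite lerBlDr lerDl invr_ge0 //.
have noninc : {homo F : n k / (n <= k)%N >-> (k <= n)%O}.
  move=> n k nk; apply/subsetPset => x; rewrite /F /= !in_itv /= !andbT.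
  move=> h; apply: le_trans h; rewrite lerD2l lerN2 lef_pV2 ?posrE //.
  by rewrite ler_nat ltnS.
have F0 : (P (F 0%N) < +oo)%E.
  by apply: (le_lt_trans (probability_le1 P (mF 0%N))); rewrite ltry.
have mcap : measurable (\bigcap_n F n) by apply: bigcap_measurable.
have cv := nonincreasing_cvg_mu F0 mF mcap noninc.
rewrite -capF -(cvg_lim _ cv) //.
apply: lime_ge; first exact: cvgP cv.
apply: nearW => n /=.
have [M [hM hP]] := H n.+1%:R^-1 ltac:(by rewrite invr_gt0).
apply: (le_trans hP); apply: le_measure; rewrite ?inE //; try exact: measurable_itv.
move=> x /=; rewrite /F !in_itv /= !andbT => hx. rewrite in_itv /= andbT; exact: le_trans (ltW hM) hx.
Qed.

End S.

Lemma min_cases (R : realType) (s z : R) :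
  (Order.min s z = s /\ s <= z) \/ (Order.min s z = z /\ z <= s).
Proof. rewrite /Order.min; case: ltP => h; [left|right]; split => //; exact: ltW. Qed.

Section pw.
Context (R : realType).
Implicit Types (s x y a b m M C mu mP : R).

Lemma pw_scale C x y s : 0 < C -> 0 <= x -> x <= y -> 0 <= s ->
  x * Order.min s (C * y) <= y * Order.min s (C * x).
Proof.
move=> C0 x0 xy s0.
have [[-> h]|[-> h]] := min_cases s (C * y);
have [[-> h']|[-> h']] := min_cases s (C * x); nra.
Qed.

Lemma pw_K1a a m s : 0 <= a -> m <= a / 2 -> 0 <= s ->
  Lf m s + Order.min s a <= 2 * Order.min s (a / 2).
Proof.
move=> a0 ma s0; rewrite /Lf.
have [[-> h]|[-> h]] := min_cases s a;
have [[-> h']|[-> h']] := min_cases s (a / 2); case: ifPn => hs; lra.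
Qed.

Lemma pw_K1b a m s : 0 <= a -> a / 2 < m -> m <= a -> 0 <= s ->
  Lf m s + a * ind m s <= 2 * Order.min s (a / 2).
Proof.
move=> a0 ma ma' s0; rewrite /Lf /ind.
have [[-> h']|[-> h']] := min_cases s (a / 2); case: ifPn => hs; case: ifPn => hs'; lra.
Qed.

Lemma pw_K2 a m s : 0 <= a -> m <= a -> 0 <= s ->
  Lf m s + a * indg a s <= Order.min s a.
Proof.
move=> a0 ma s0; rewrite /Lf /indg.
have [[-> h']|[-> h']] := min_cases s a; case: ifPn => hs; case: ifPn => hs'; lra.
Qed.

Lemma pw_c C a mu mP s : 0 < C -> a = C * mP -> mP <= mu -> 0 <= s ->
  Order.min s (C * mu) <= Order.min s a + C * (mu - mP) * indg a s.
Proof.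
move=> C0 -> mm s0; rewrite /indg.
have [[-> h']|[-> h']] := min_cases s (C * mP);
have [[-> h]|[-> h]] := min_cases s (C * mu); case: ifPn => hs; nra.
Qed.

Lemma pw_E a M s : 0 <= a -> a < M -> 0 <= s ->
  Order.min s a + (M - a) * ind M s <= Order.min s M.
Proof.
move=> a0 aM s0; rewrite /ind.
have [[-> h']|[-> h']] := min_cases s a;
have [[-> h]|[-> h]] := min_cases s M; case: ifPn => hs; lra.
Qed.

Lemma pw_b C mP mu s : 0 < C -> mP / 2 <= mu -> mu <= mP -> 0 <= s ->
  2 * (mP - mu) * Order.min s (C * (mP / 2)) + (2 * mu - mP) * Order.min s (C * mP)
  <= mP * Order.min s (C * mu).
Proof.
move=> C0 h1 h2 s0.
have [[-> h]|[-> h]] := min_cases s (C * mu);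
have [[-> h']|[-> h']] := min_cases s (C * mP);
have [[-> h'']|[-> h'']] := min_cases s (C * (mP / 2)); nra.
Qed.

End pw.

Ltac gd := repeat first [apply: good_add | apply: good_scale | apply: good_min
  | apply: good_ind | apply: good_indg | apply: good_Lf | apply: good_cst].

Unset Implicit Arguments.

Theorem mainTheorem18 (R : realType) (P : probability R R) (C alpha muPC : R) :
  1 < C ->
  P `]-oo, 0[%classic = 0%E ->
  is_clipped_mean P C muPC ->
  0 < muPC ->
  0 < alpha ->
  ((alpha * muPC)%:E <=
     \int[P]_(t in setT) (if t < inv_median P C then t else 0)%:E)%E ->
  (forall mu : R, 0 <= mu -> mu <= muPC / 2 ->
     ((alpha * mu)%:E <= Gclip P C mu)%E) /\
  (forall mu : R, muPC / 2 <= mu -> mu <= muPC ->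
     ((alpha * (muPC - mu))%:E <= Gclip P C mu)%E) /\
  (forall mu : R, muPC <= mu ->
     (Gclip P C mu <= (- (alpha * (mu - muPC)))%:E)%E).
Proof.
move=> C1 P0 [mu0 [Gmu maxmu]] mupos alpha0 Hint.
have C0 : 0 < C by lra.
set m := inv_median P C in Hint.
rewrite (B2 P0) lee_fin in Hint.
pose f mu := Ex P (fun s => Order.min s (C * mu)).
have Gdef : forall mu, Gclip P C mu = (f mu - mu)%:E by move=> mu; exact: B1 P0 C mu.
have fa : f muPC = muPC.
  by move: Gmu; rewrite Gdef => /eqP; rewrite eqe subr_eq0 => /eqP.
set a := C * muPC.
have a0 : 0 < a by rewrite /a mulr_gt0.
have scale : forall x y, 0 <= x -> x <= y -> x * f y <= y * f x.
  move=> x y x0 xy; rewrite /f -!Ex_scale; try by gd.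
  apply: Ex_le; try by gd.
  by move=> s s0; apply: pw_scale.
pose S := [set M : R | 0 <= M /\ ((C^-1)%:E <= P `[M, +oo[%classic)%E].
have mdef : m = sup S by [].
have ma : m <= a.
  case: (pselect (has_sup S)) => hs; last by rewrite mdef sup_out //; exact: ltW.
  rewrite leNgt; apply/negP => am.
  have eps0 : 0 < m - a by rewrite subr_gt0.
  have [M [M0 HM] aM] := sup_adherent eps0 hs.
  rewrite -mdef opprB addrCA subrr addr0 in aM.
  rewrite (B3 P0) lee_fin in HM.
  have h1 : M / C <= f (M / C).
    have -> : f (M / C) = Ex P (fun s => Order.min s M).
      by rewrite /f mulrC divfK //; lra.
    have : Ex P (fun s => Order.min s a + (M - a) * ind M s) <= Ex P (fun s => Order.min s M).
      apply: Ex_le; try by gd.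
      by move=> s s0; apply: pw_E => //; lra.
    rewrite Ex_add ?Ex_scale; try by gd.
    rewrite -/(f muPC) fa => h.
    apply: le_trans h.
    have : (M - a) * C^-1 <= (M - a) * Ex P (ind M) by apply: ler_wpM2l => //; lra.
    move=> h2; apply: le_trans (_ : muPC + (M - a) * C^-1 <= _); last by rewrite lerD2l.
    rewrite /a mulrBl mulrAC mulfV ?mul1r; lra.
  have h2 : f (M / C) <= M / C.
    have hx : muPC <= M / C by rewrite ler_pdivlMr // mulrC -/a; exact: ltW.
    have := scale _ _ (ltW mupos) hx; rewrite fa => h.
    by rewrite -(ler_pM2l mupos) [muPC * (M / C)]mulrC.
  have : M / C <= muPC.
    apply: maxmu; first by apply: divr_ge0 => //; lra.
    have e : f (M / C) = M / C by apply/eqP; rewrite eq_le h1 h2.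
    by rewrite Gdef e subrr.
  rewrite ler_pdivrMr //; rewrite mulrC -/a; lra.
have Fm : C^-1 <= Ex P (ind m).
  case: (pselect (has_sup S)) => hs.
  - rewrite -lee_fin -(B3 P0); apply: Ffact => e e0.
    have [M [M0 HM] hM] := sup_adherent e0 hs.
    by exists M; split => //; rewrite mdef.
  - have -> : m = 0 by rewrite mdef sup_out.
    rewrite -{1}(Ex_cst P C^-1); apply: Ex_le; try by gd.
    move=> s s0; rewrite /ind s0; apply: ltW; rewrite invf_lt1 //.
set L := Ex P (Lf m) in Hint.
have ba : C * (muPC / 2) = a / 2 by rewrite /a mulrA.
have fb : f (muPC / 2) = Ex P (fun s => Order.min s (a / 2)) by rewrite /f ba.
have K1 : (1 + alpha) * muPC <= 2 * f (muPC / 2).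
  rewrite fb; case: (leP m (a / 2)) => hm.
  - have : Ex P (fun s => Lf m s + Order.min s a) <= Ex P (fun s => 2 * Order.min s (a / 2)).
      apply: Ex_le; try by gd.
      by move=> s s0; apply: pw_K1a => //; exact: ltW.
    rewrite Ex_add ?Ex_scale; try by gd.
    rewrite -/L -/(f muPC) fa; lra.
  - have : Ex P (fun s => Lf m s + a * ind m s) <= Ex P (fun s => 2 * Order.min s (a / 2)).
      apply: Ex_le; try by gd.
      by move=> s s0; apply: pw_K1b => //; exact: ltW.
    rewrite Ex_add ?Ex_scale; try by gd.
    have : a * C^-1 <= a * Ex P (ind m) by apply: ler_wpM2l => //; exact: ltW.
    have -> : a * C^-1 = muPC by rewrite /a mulrAC mulfV ?mul1r //; lra.
    rewrite -/L; lra.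
have K2 : a * Ex P (indg a) <= (1 - alpha) * muPC.
  have : Ex P (fun s => Lf m s + a * indg a s) <= Ex P (fun s => Order.min s a).
    apply: Ex_le; try by gd.
    by move=> s s0; apply: pw_K2 => //; exact: ltW.
  rewrite Ex_add ?Ex_scale; try by gd.
  rewrite -/L -/(f muPC) fa; lra.
split; [|split].
- move=> mu mu00 mu2; rewrite Gdef lee_fin.
  have := scale _ _ mu00 mu2 => h.
  have h' : mu * ((1 + alpha) * muPC) <= mu * (2 * f (muPC / 2)) by apply: ler_wpM2l.
  nra.
- move=> mu mu1 mu2; rewrite Gdef lee_fin.
  have : Ex P (fun s => 2 * (muPC - mu) * Order.min s (C * (muPC / 2)) +
            (2 * mu - muPC) * Order.min s (C * muPC)) <= Ex P (fun s => muPC * Order.min s (C * mu)).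
    apply: Ex_le; try by gd.
    by move=> s s0; apply: pw_b.
  rewrite Ex_add ?Ex_scale; try by gd.
  rewrite -/(f muPC) -/(f (muPC / 2)) -/(f mu) fa => h.
  have h' : (muPC - mu) * ((1 + alpha) * muPC) <= (muPC - mu) * (2 * f (muPC / 2)).
    by apply: ler_wpM2l; lra.
  nra.
- move=> mu mu1; rewrite Gdef lee_fin.
  have : Ex P (fun s => Order.min s (C * mu)) <= Ex P (fun s => Order.min s a + C * (mu - muPC) * indg a s).
    apply: Ex_le; try by gd.
    by move=> s s0; apply: pw_c.
  rewrite Ex_add ?Ex_scale; try by gd.
  rewrite -/(f mu) -/(f muPC) fa => h.
  have h1 : C * Ex P (indg a) <= 1 - alpha.
    rewrite -(ler_pM2l mupos); move: K2; rewrite /a; nra.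
  have h2 : (mu - muPC) * (C * Ex P (indg a)) <= (mu - muPC) * (1 - alpha).
    by apply: ler_wpM2l; lra.
  nra.
Qed.
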